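(* For $|u|<1$, \[ - \operatorname{Li}_2 \left( \frac{2 u^2 - 3 u + \sqrt{ u (4-3u)}}{2 (u-1)^2} \right) - \operatorname{Li}_2 \left( \frac{2 u^2 - 3 u - \sqrt{ u (4-3u)}}{2 (u-1)^2} \right) = \frac{3}{2} \ln^2 \left( 1 - \frac{u - \sqrt{(4 - 3 u) u}}{2 (u-1)} \right) - \operatorname{Li}_2 \left( \frac{u}{u - 1} \right). \]
   Context: $\operatorname{Li}_2(x)=\sum_{n\ge1}x^n/n^2$ is the dilogarithm (analytically continued); square roots and logarithms are principal branches. *)

(* Defs.v *)
From Stdlib Require Import Reals.
From Coquelicot Require Import Coquelicot.
Open Scope R_scope.

(* Principal argument, with values in (-PI, PI]. *)
Definition Carg (z : C) : R :=
  let x := fst z in let y := snd z in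
  if Rlt_dec 0 x then atan (y / x)
  else if Rlt_dec x 0 then
    (if Rle_dec 0 y then atan (y / x) + PI else atan (y / x) - PI)
  else if Rlt_dec 0 y then PI / 2
  else if Rlt_dec y 0 then - (PI / 2)
  else 0.

(* Principal logarithm: Log z = ln |z| + i Arg z (value at 0 irrelevant). *)
Definition Clog (z : C) : C := (ln (Cmod z), Carg z).

Definition Cexp (z : C) : C :=
  (exp (fst z) * cos (snd z), exp (fst z) * sin (snd z)).

Definition Csqrt (z : C) : C :=
  if Ceq_dec z 0%C then 0%C else Cexp (Cdiv (Clog z) (RtoC 2)).

(* Dilogarithm (principal branch), via the standard integral representation
   Li2(z) = - int_0^z Log(1-s)/s ds = - int_0^1 Log(1 - t z)/t dt,
   which agrees with sum_{n>=1} z^n/n^2 for |z| <= 1 and is its analytic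
   continuation to C \ [1, +oo). *)
Definition Li2_integrand (z : C) (t : R) : C :=
  Cdiv (Clog (Cminus 1%C (Cmult (RtoC t) z))) (RtoC t).

Definition Li2 (z : C) : C :=
  Copp (RInt (fun t => fst (Li2_integrand z t)) 0 1,
        RInt (fun t => snd (Li2_integrand z t)) 0 1).

(* Main.v *)
Require Import Defs.
From Stdlib Require Import Reals Lra.
From Coquelicot Require Import Coquelicot.
Open Scope R_scope.
Implicit Types x a b l : R.

Lemma D_eq (f : R -> R) x l (l' : R) : is_derive f x l -> l = l' -> is_derive f x l'.
Proof. intros H ->; exact H. Qed.

Lemma D_const (c x : R) : is_derive (fun _ : R => c) x 0.
Proof. apply (is_derive_const c x). Qed.

Lemma D_id (x : R) : is_derive (fun r : R => r) x 1.
Proof. apply (is_derive_id x). Qed.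

Lemma D_plus (f g : R -> R) x a b : is_derive f x a -> is_derive g x b ->
  is_derive (fun r => f r + g r) x (a + b).
Proof. intros; apply (is_derive_plus f g x a b); auto. Qed.

Lemma D_minus (f g : R -> R) x a b : is_derive f x a -> is_derive g x b ->
  is_derive (fun r => f r - g r) x (a - b).
Proof. intros; apply (is_derive_minus f g x a b); auto. Qed.

Lemma D_opp (f : R -> R) x a : is_derive f x a -> is_derive (fun r => - f r) x (- a).
Proof. intros; apply (is_derive_opp f x a); auto. Qed.

Lemma D_mult (f g : R -> R) x a b : is_derive f x a -> is_derive g x b ->
  is_derive (fun r => f r * g r) x (a * g x + f x * b).
Proof. intros; apply (is_derive_mult f g x a b); auto. intros; apply Rmult_comm. Qed.

Lemma D_inv (f : R -> R) x a : is_derive f x a -> f x <> 0 ->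
  is_derive (fun r => / f r) x (- a / (f x)^2).
Proof. intros; apply is_derive_inv; auto. Qed.

Lemma D_comp (f g : R -> R) x a b : is_derive f (g x) a -> is_derive g x b ->
  is_derive (fun r => f (g r)) x (b * a).
Proof. intros; apply (is_derive_comp f g x a b); auto. Qed.

Lemma D_pow2 (f : R -> R) x a : is_derive f x a -> is_derive (fun r => f r ^ 2) x (2 * f x * a).
Proof. intros H. eapply D_eq.
  - apply (is_derive_ext (fun r => f r * f r)). intro; simpl; ring. apply (D_mult _ _ _ _ _ H H).
  - ring. Qed.

Definition Cder (f : R -> C) (x : R) (l : C) : Prop :=
  is_derive (fun r => fst (f r)) x (fst l) /\ is_derive (fun r => snd (f r)) x (snd l).

Lemma Cder_eq (f : R -> C) x (l l' : C) : Cder f x l -> l = l' -> Cder f x l'.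
Proof. intros H ->; exact H. Qed.

Lemma Cder_ext (f g : R -> C) x (l : C) : (forall r, f r = g r) -> Cder f x l -> Cder g x l.
Proof. intros E [H1 H2]; split; eapply is_derive_ext; try eassumption; intro; simpl; rewrite E; auto. Qed.

Lemma Cder_ext_loc (f g : R -> C) x (l : C) : locally x (fun r => f r = g r) -> Cder f x l -> Cder g x l.
Proof.
  intros E [H1 H2]; split; eapply is_derive_ext_loc; try eassumption;
  eapply filter_imp; try apply E; intros r Hr; simpl; rewrite Hr; auto.
Qed.

Lemma Cder_const (c : C) x : Cder (fun _ => c) x 0%C.
Proof. split; apply D_const. Qed.

Lemma Cder_id x : Cder (fun r => RtoC r) x 1%C.
Proof. split; simpl. apply D_id. apply D_const. Qed.

Lemma Cder_plus (f g : R -> C) x (a b : C) : Cder f x a -> Cder g x b -> Cder (fun r => f r + g r)%C x (a + b)%C.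
Proof. intros [? ?] [? ?]; split; simpl; apply D_plus; auto. Qed.

Lemma Cder_minus (f g : R -> C) x (a b : C) : Cder f x a -> Cder g x b -> Cder (fun r => f r - g r)%C x (a - b)%C.
Proof. intros [? ?] [? ?]; split; simpl; apply D_plus; auto; apply D_opp; auto. Qed.

Lemma Cder_opp (f : R -> C) x (a : C) : Cder f x a -> Cder (fun r => - f r)%C x (- a)%C.
Proof. intros [? ?]; split; simpl; apply D_opp; auto. Qed.

Lemma Cder_mult (f g : R -> C) x (a b : C) : Cder f x a -> Cder g x b ->
  Cder (fun r => f r * g r)%C x (a * g x + f x * b)%C.
Proof.
  intros [? ?] [? ?]; split; simpl.
  - eapply D_eq. apply D_minus; apply D_mult; eauto. simpl; ring.
  - eapply D_eq. apply D_plus; apply D_mult; eauto. simpl; ring.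
Qed.

Lemma Cder_inv (f : R -> C) x (a : C) : Cder f x a -> f x <> 0%C ->
  Cder (fun r => / f r)%C x (- a / (f x * f x))%C.
Proof.
  intros [H1 H2] Hn.
  assert (Hd : fst (f x) ^ 2 + snd (f x) ^ 2 <> 0).
  { intro E. apply Hn. destruct (f x) as [p q]; simpl in *.
    assert (p = 0) by nra. assert (q = 0) by nra. subst; reflexivity. }
  split; unfold Cinv; cbn [fst snd].
  - eapply D_eq. apply D_mult. exact H1. apply D_inv.
    apply D_plus; [apply (D_pow2 _ _ _ H1) | apply (D_pow2 _ _ _ H2)].
    exact Hd. cbv beta.
    destruct (f x) as [p q], a as [a1 a2]; unfold Cdiv, Cmult, Cinv, Copp; cbn [fst snd] in *.
    field. split; auto. intro E. apply Hd. nra.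
  - eapply D_eq. apply D_mult. apply D_opp; exact H2. apply D_inv.
    apply D_plus; [apply (D_pow2 _ _ _ H1) | apply (D_pow2 _ _ _ H2)].
    exact Hd. cbv beta.
    destruct (f x) as [p q], a as [a1 a2]; unfold Cdiv, Cmult, Cinv, Copp; cbn [fst snd] in *.
    field. split; auto. intro E. apply Hd. nra.
Qed.

Lemma loc_pos (g : R -> R) x l : is_derive g x l -> 0 < g x -> locally x (fun r => 0 < g r).
Proof.
  intros H Hp. assert (Hc : continuous g x) by (apply (@ex_derive_continuous R_AbsRing R_NormedModule g x); exists l; exact H).
  apply Hc. apply (locally_open (fun u => 0 < u)); auto. apply open_gt.
Qed.

Lemma loc_neg (g : R -> R) x l : is_derive g x l -> g x < 0 -> locally x (fun r => g r < 0).
Proof.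
  intros H Hp. assert (Hc : continuous g x) by (apply (@ex_derive_continuous R_AbsRing R_NormedModule g x); exists l; exact H).
  apply (Hc (fun u => u < 0)). apply (locally_open (fun u => u < 0)); auto. apply open_lt.
Qed.

Definition nocut (w : C) : Prop := 0 < fst w \/ snd w <> 0.

Lemma nocut_neq0 w : nocut w -> w <> 0%C.
Proof. intros [H|H] E; subst; simpl in H; lra. Qed.

Lemma Carg_chart1 p q : 0 < p -> Carg (p, q) = atan (q / p).
Proof. intros H; unfold Carg; simpl. destruct (Rlt_dec 0 p); [reflexivity|lra]. Qed.

Lemma Carg_chart2 p q : 0 < q -> Carg (p, q) = PI / 2 - atan (p / q).
Proof.
  intros H; unfold Carg; simpl.
  destruct (Rlt_dec 0 p) as [Hp|Hp].
  - replace (q / p) with (/ (p / q)) by (field; lra). apply atan_inv.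
    apply Rdiv_lt_0_compat; lra.
  - destruct (Rlt_dec p 0) as [Hn|Hn].
    + destruct (Rle_dec 0 q) as [_|Hq]; [|lra].
      replace (q / p) with (- / (- (p / q))) by (field; lra).
      rewrite atan_opp, atan_inv. rewrite atan_opp. lra.
      replace (- (p / q)) with ((-p) / q) by (field; lra). apply Rdiv_lt_0_compat; lra.
    + assert (p = 0) by lra; subst.
      destruct (Rlt_dec 0 q); [|lra]. unfold Rdiv; rewrite Rmult_0_l, atan_0; ring.
Qed.

Lemma Carg_chart3 p q : q < 0 -> Carg (p, q) = - (PI / 2) - atan (p / q).
Proof.
  intros H; unfold Carg; simpl.
  destruct (Rlt_dec 0 p) as [Hp|Hp].
  - replace (q / p) with (- / (p / (- q))) by (field; lra).
    rewrite atan_opp, atan_inv.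
    replace (p / - q) with (- (p / q)) by (field; lra). rewrite atan_opp. field.
    apply Rdiv_lt_0_compat; lra.
  - destruct (Rlt_dec p 0) as [Hn|Hn].
    + destruct (Rle_dec 0 q) as [Hq|_]; [lra|].
      replace (q / p) with (/ (p / q)) by (field; lra). rewrite atan_inv. field.
      replace (p / q) with ((-p) / (-q)) by (field; lra). apply Rdiv_lt_0_compat; lra.
    + assert (p = 0) by lra; subst.
      destruct (Rlt_dec 0 q); [lra|]. destruct (Rlt_dec q 0); [|lra].
      unfold Rdiv; rewrite Rmult_0_l, atan_0; ring.
Qed.

Lemma Carg_c1 w : 0 < fst w -> Carg w = atan (snd w / fst w).
Proof. destruct w; apply Carg_chart1. Qed.
Lemma Carg_c2 w : 0 < snd w -> Carg w = PI / 2 - atan (fst w / snd w).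
Proof. destruct w; apply Carg_chart2. Qed.
Lemma Carg_c3 w : snd w < 0 -> Carg w = - (PI / 2) - atan (fst w / snd w).
Proof. destruct w; apply Carg_chart3. Qed.

Lemma D_atan_div (g h : R -> R) x a b : is_derive g x a -> is_derive h x b -> h x <> 0 ->
  is_derive (fun r => atan (g r / h r)) x ((a * h x - g x * b) / (h x ^ 2 + g x ^ 2)).
Proof.
  intros Hg Hh Hn. eapply D_eq.
  - apply (D_comp atan (fun r => g r / h r)). apply is_derive_atan.
    unfold Rdiv. apply D_mult. exact Hg. apply D_inv; eauto.
  - cbv beta. unfold Rsqr. field. split; auto. intro E.
    assert (h x ^ 2 > 0) by (apply pow2_gt_0; auto). nra.
Qed.

Lemma Cder_Clog (p : R -> C) x (dp : C) : Cder p x dp -> nocut (p x) ->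
  Cder (fun r => Clog (p r)) x (dp / p x)%C.
Proof.
  intros [H1 H2] Hnc.
  assert (HS : 0 < fst (p x) ^ 2 + snd (p x) ^ 2).
  { destruct Hnc as [h|h]. 
    - assert (0 < fst (p x) ^ 2) by (apply pow_lt; auto). assert (0 <= snd (p x) ^ 2) by (apply pow2_ge_0). lra.
    - assert (0 < snd (p x) ^ 2) by (apply pow2_gt_0; auto). assert (0 <= fst (p x) ^ 2) by (apply pow2_ge_0). lra. }
  split; unfold Clog; cbn [fst snd].
  - eapply D_eq.
    + apply (D_comp ln (fun r => Cmod (p r))). apply is_derive_ln. unfold Cmod. apply sqrt_lt_R0; auto.
      unfold Cmod. apply is_derive_sqrt; auto.
      apply D_plus; [apply (D_pow2 _ _ _ H1) | apply (D_pow2 _ _ _ H2)].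
    + unfold Cmod. destruct (p x) as [p1 p2], dp as [d1 d2]. unfold Cdiv, Cmult, Cinv; cbn [fst snd] in *.
      assert (Hs : sqrt (p1 ^ 2 + p2 ^ 2) * sqrt (p1 ^ 2 + p2 ^ 2) = p1 ^ 2 + p2 ^ 2) by (apply sqrt_sqrt; lra).
      assert (Hs0 : 0 < sqrt (p1 ^ 2 + p2 ^ 2)) by (apply sqrt_lt_R0; lra).
      set (s := sqrt (p1 ^ 2 + p2 ^ 2)) in *. rewrite <- Hs. field. lra.
  - destruct Hnc as [h|h].
    + apply (is_derive_ext_loc (fun r => atan (snd (p r) / fst (p r)))).
      { eapply filter_imp. 2: apply (loc_pos _ _ _ H1 h). intros r Hr.
        simpl. rewrite Carg_c1; auto. }
      eapply D_eq. apply D_atan_div; eauto. lra. cbv beta.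
      destruct (p x) as [p1 p2], dp as [d1 d2]. unfold Cdiv, Cmult, Cinv; cbn [fst snd] in *. field. lra.
    + destruct (Rlt_dec 0 (snd (p x))) as [h'|h'].
      * apply (is_derive_ext_loc (fun r => PI / 2 - atan (fst (p r) / snd (p r)))).
        { eapply filter_imp. 2: apply (loc_pos _ _ _ H2 h'). intros r Hr.
          simpl. rewrite Carg_c2; auto. }
        eapply D_eq. apply D_minus. apply D_const. apply D_atan_div; eauto. cbv beta.
        destruct (p x) as [p1 p2], dp as [d1 d2]. unfold Cdiv, Cmult, Cinv; cbn [fst snd] in *. field. lra.
      * assert (h2 : snd (p x) < 0) by lra.
        apply (is_derive_ext_loc (fun r => - (PI / 2) - atan (fst (p r) / snd (p r)))).
        { eapply filter_imp. 2: apply (loc_neg _ _ _ H2 h2). intros r Hr.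
          simpl. rewrite Carg_c3; auto. }
        eapply D_eq. apply D_minus. apply D_const. apply D_atan_div; eauto. cbv beta.
        destruct (p x) as [p1 p2], dp as [d1 d2]. unfold Cdiv, Cmult, Cinv; cbn [fst snd] in *. field. lra.
Qed.

Lemma Cder_cont1 (f : R -> C) x (l : C) : Cder f x l -> continuity_pt (fun r => fst (f r)) x.
Proof. intros [H _]. apply continuity_pt_filterlim.
  apply (@ex_derive_continuous R_AbsRing R_NormedModule). exists (fst l); exact H. Qed.
Lemma Cder_cont2 (f : R -> C) x (l : C) : Cder f x l -> continuity_pt (fun r => snd (f r)) x.
Proof. intros [_ H]. apply continuity_pt_filterlim.
  apply (@ex_derive_continuous R_AbsRing R_NormedModule). exists (snd l); exact H. Qed.

Lemma loc_to_2d (P : R -> Prop) x y : locally x P -> locally_2d (fun u v => P u) x y.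
Proof. intros [eps H]. exists eps. intros u v Hu _. apply H. exact Hu. Qed.

Definition C2c (F : R -> R -> C) x y : Prop :=
  continuity_2d_pt (fun u v => fst (F u v)) x y /\ continuity_2d_pt (fun u v => snd (F u v)) x y.

Lemma C2c_ext (F G : R -> R -> C) x y : (forall u v, F u v = G u v) -> C2c F x y -> C2c G x y.
Proof. intros E [H1 H2]; split.
  - apply (continuity_2d_pt_ext (fun u v => fst (F u v))); auto. intros; rewrite E; auto.
  - apply (continuity_2d_pt_ext (fun u v => snd (F u v))); auto. intros; rewrite E; auto. Qed.

Lemma C2c_const (c : C) x y : C2c (fun _ _ => c) x y.
Proof. split; apply continuity_2d_pt_const. Qed.

Lemma C2c_v x y : C2c (fun _ v => RtoC v) x y.
Proof. split; simpl. apply continuity_2d_pt_id2. apply continuity_2d_pt_const. Qed.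

Lemma C2c_u (z : R -> C) x y : continuity_pt (fun r => fst (z r)) x -> continuity_pt (fun r => snd (z r)) x ->
  C2c (fun u _ => z u) x y.
Proof. intros H1 H2; split.
  - apply (continuity_1d_2d_pt_comp (fun r => fst (z r)) (fun u v => u)); auto. apply continuity_2d_pt_id1.
  - apply (continuity_1d_2d_pt_comp (fun r => snd (z r)) (fun u v => u)); auto. apply continuity_2d_pt_id1.
Qed.

Lemma C2c_plus F G x y : C2c F x y -> C2c G x y -> C2c (fun u v => F u v + G u v)%C x y.
Proof. intros [? ?] [? ?]; split; simpl; apply continuity_2d_pt_plus; auto. Qed.

Lemma C2c_opp F x y : C2c F x y -> C2c (fun u v => - F u v)%C x y.
Proof. intros [? ?]; split; simpl; apply continuity_2d_pt_opp; auto. Qed.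

Lemma C2c_minus F G x y : C2c F x y -> C2c G x y -> C2c (fun u v => F u v - G u v)%C x y.
Proof. intros; apply C2c_plus; auto; apply C2c_opp; auto. Qed.

Lemma C2c_mult F G x y : C2c F x y -> C2c G x y -> C2c (fun u v => F u v * G u v)%C x y.
Proof. intros [? ?] [? ?]; split; simpl.
  apply continuity_2d_pt_minus; apply continuity_2d_pt_mult; auto.
  apply continuity_2d_pt_plus; apply continuity_2d_pt_mult; auto. Qed.

Lemma C2c_inv F x y : C2c F x y -> F x y <> 0%C -> C2c (fun u v => / F u v)%C x y.
Proof.
  intros [H1 H2] Hn.
  assert (Hd : fst (F x y) ^ 2 + snd (F x y) ^ 2 <> 0).
  { intro E. apply Hn. destruct (F x y) as [p q]; simpl in *.
    assert (p = 0) by nra. assert (q = 0) by nra. subst; reflexivity. }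
  assert (HD : continuity_2d_pt (fun u v => / (fst (F u v) ^ 2 + snd (F u v) ^ 2)) x y).
  { apply continuity_2d_pt_inv; auto.
    apply continuity_2d_pt_plus; simpl;
    apply continuity_2d_pt_mult; auto; apply continuity_2d_pt_mult; auto; apply continuity_2d_pt_const. }
  split; unfold Cinv; cbn [fst snd].
  - apply continuity_2d_pt_mult; auto.
  - apply continuity_2d_pt_mult; auto. apply continuity_2d_pt_opp; auto.
Qed.

Lemma C2c_loc_nocut F x y : C2c F x y -> nocut (F x y) -> locally_2d (fun u v => nocut (F u v)) x y.
Proof.
  intros [H1 H2] [h|h].
  - destruct (H1 (mkposreal _ h)) as [d Hd]. exists d. intros u v Hu Hv.
    left. specialize (Hd u v Hu Hv). simpl in Hd. apply Rabs_def2 in Hd. lra.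
  - eapply locally_2d_impl. 2: apply (continuity_2d_pt_neq_0 _ _ _ H2 h).
    apply locally_2d_forall. intros u v Hn. right; exact Hn.
Qed.

Lemma nocut_seg (w : C) t : nocut (1 - w)%C -> 0 <= t <= 1 -> nocut (1 - RtoC t * w)%C.
Proof.
  destruct w as [w1 w2]; unfold nocut; simpl. intros [h|h] Ht.
  - left. assert (0 <= t * (1 - w1)) by (apply Rmult_le_pos; lra). nra.
  - destruct (Req_dec t 0) as [->|Ht0].
    + left. lra.
    + right. intro E. apply h. assert (t * w2 = 0) by lra.
      apply Rmult_integral in H. destruct H; [contradiction|lra].
Qed.

Lemma Clog_1 : Clog 1%C = 0%C.
Proof.
  unfold Clog. rewrite Cmod_1, ln_1. unfold Carg; simpl.
  destruct (Rlt_dec 0 1); [|lra]. unfold Rdiv; rewrite Rmult_0_l, atan_0. reflexivity.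
Qed.

Definition Jt (w : C) (t : R) : C := (/ (1 - RtoC t * w))%C.
Definition Ik (w : C) : C := (RInt (fun t => fst (Jt w t)) 0 1, RInt (fun t => snd (Jt w t)) 0 1).

Lemma Cder_lin (w : C) t : Cder (fun s => 1 - RtoC s * w)%C t (- w)%C.
Proof. eapply Cder_eq. apply Cder_minus. apply Cder_const. apply Cder_mult. apply Cder_id. apply Cder_const.
  cbv beta. ring. Qed.

Lemma nocut_loc (p : R -> C) x (d : C) : Cder p x d -> nocut (p x) -> locally x (fun r => nocut (p r)).
Proof.
  intros [H1 H2] [h|h].
  - eapply filter_imp. 2: apply (loc_pos _ _ _ H1 h). intros r Hr; left; exact Hr.
  - destruct (Rlt_dec 0 (snd (p x))) as [h'|h'].
    + eapply filter_imp. 2: apply (loc_pos _ _ _ H2 h'). intros r Hr; right; simpl in *; lra.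
    + assert (h2 : snd (p x) < 0) by lra.
      eapply filter_imp. 2: apply (loc_neg _ _ _ H2 h2). intros r Hr; right; simpl in *; lra.
Qed.

Lemma Jt_Cder (w : C) t : nocut (1 - RtoC t * w)%C -> Cder (fun s => Jt w s) t (- (- w) / ((1 - RtoC t * w) * (1 - RtoC t * w)))%C.
Proof. intros H. unfold Jt. apply Cder_inv. apply Cder_lin. apply nocut_neq0; auto. Qed.

Lemma Jt_exRInt (w : C) : nocut (1 - w)%C ->
  ex_RInt (fun t => fst (Jt w t)) 0 1 /\ ex_RInt (fun t => snd (Jt w t)) 0 1.
Proof.
  intros H. split; apply (@ex_RInt_continuous R_CompleteNormedModule); intros t Ht;
  rewrite Rmin_left, Rmax_right in Ht by lra; apply continuity_pt_filterlim;
  assert (Hn := nocut_seg w t H Ht).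
  - exact (Cder_cont1 _ _ _ (Jt_Cder w t Hn)).
  - exact (Cder_cont2 _ _ _ (Jt_Cder w t Hn)).
Qed.

Lemma RInt_cJ (c w : C) : nocut (1 - w)%C ->
  RInt (fun t => fst (c * Jt w t)%C) 0 1 = fst (c * Ik w)%C /\
  RInt (fun t => snd (c * Jt w t)%C) 0 1 = snd (c * Ik w)%C.
Proof.
  intros H. destruct (Jt_exRInt w H) as [E1 E2].
  pose proof (RInt_correct _ _ _ E1) as I1. pose proof (RInt_correct _ _ _ E2) as I2.
  destruct c as [c1 c2]. unfold Ik. split; apply is_RInt_unique.
  - apply (is_RInt_ext (fun t => minus (scal c1 (fst (Jt w t))) (scal c2 (snd (Jt w t))))).
    intros; reflexivity.
    exact (is_RInt_minus _ _ _ _ _ _ (is_RInt_scal _ _ _ c1 _ I1) (is_RInt_scal _ _ _ c2 _ I2)).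
  - apply (is_RInt_ext (fun t => plus (scal c1 (snd (Jt w t))) (scal c2 (fst (Jt w t))))).
    intros; reflexivity.
    exact (is_RInt_plus _ _ _ _ _ _ (is_RInt_scal _ _ _ c1 _ I2) (is_RInt_scal _ _ _ c2 _ I1)).
Qed.

Lemma Li2_I (w : C) : w <> 0%C -> nocut (1 - w)%C -> Ik w = (- Clog (1 - w) / w)%C.
Proof.
  intros Hw H.
  assert (Hd : forall t, 0 <= t <= 1 ->
     Cder (fun s => Clog (1 - RtoC s * w))%C t ((- w) * Jt w t)%C).
  { intros t Ht. eapply Cder_eq. apply Cder_Clog. apply Cder_lin. apply nocut_seg; auto.
    unfold Jt; reflexivity. }
  assert (Hc : forall t, 0 <= t <= 1 -> Cder (fun s => (- w) * Jt w s)%C t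
       (0 * Jt w t + - w * (- (- w) / ((1 - RtoC t * w) * (1 - RtoC t * w))))%C).
  { intros t Ht. apply Cder_mult. apply Cder_const. apply Jt_Cder. apply nocut_seg; auto. }
  assert (E0 : Clog (1 - RtoC 0 * w)%C = 0%C).
  { assert (Z : (1 - RtoC 0 * w = 1)%C) by ring. rewrite Z. apply Clog_1. }
  assert (E1 : (1 - RtoC 1 * w)%C = (1 - w)%C) by ring.
  destruct (RInt_cJ (- w) w H) as [R1 R2].
  assert (F1 : RInt (fun t => fst ((- w) * Jt w t)%C) 0 1 = fst (Clog (1 - w))).
  { apply is_RInt_unique.
    replace (fst (Clog (1 - w))) with (minus (fst (Clog (1 - RtoC 1 * w))) (fst (Clog (1 - RtoC 0 * w)))).
    apply (is_RInt_derive (fun s => fst (Clog (1 - RtoC s * w)%C))).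
    - intros t Ht. rewrite Rmin_left, Rmax_right in Ht by lra. apply (Hd t Ht).
    - intros t Ht. rewrite Rmin_left, Rmax_right in Ht by lra. apply continuity_pt_filterlim.
      exact (Cder_cont1 _ _ _ (Hc t Ht)).
    - rewrite E0, E1. simpl. unfold minus, plus, opp; simpl. ring. }
  assert (F2 : RInt (fun t => snd ((- w) * Jt w t)%C) 0 1 = snd (Clog (1 - w))).
  { apply is_RInt_unique.
    replace (snd (Clog (1 - w))) with (minus (snd (Clog (1 - RtoC 1 * w))) (snd (Clog (1 - RtoC 0 * w)))).
    apply (is_RInt_derive (fun s => snd (Clog (1 - RtoC s * w)%C))).
    - intros t Ht. rewrite Rmin_left, Rmax_right in Ht by lra. apply (Hd t Ht).
    - intros t Ht. rewrite Rmin_left, Rmax_right in Ht by lra. apply continuity_pt_filterlim.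
      exact (Cder_cont2 _ _ _ (Hc t Ht)).
    - rewrite E0, E1. simpl. unfold minus, plus, opp; simpl. ring. }
  assert (E : (- w * Ik w)%C = Clog (1 - w)).
  { apply injective_projections; congruence. }
  rewrite <- E. field. exact Hw.
Qed.

Definition htil (w : C) (t : R) : C :=
  if Req_EM_T t 0 then (- w)%C else (Clog (1 - RtoC t * w) / RtoC t)%C.

Lemma Li2_htil w : Li2 w = (- RInt (fun t => fst (htil w t)) 0 1, - RInt (fun t => snd (htil w t)) 0 1).
Proof.
  unfold Li2, Copp; simpl. f_equal; f_equal; apply RInt_ext; intros t Ht;
  rewrite Rmin_left, Rmax_right in Ht by lra; unfold htil; destruct Req_EM_T; try lra; reflexivity.
Qed.

Lemma htil_Cder (z : R -> C) (d : C) u t : Cder z u d -> nocut (1 - RtoC t * z u)%C ->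
  Cder (fun r => htil (z r) t) u ((- d) * Jt (z u) t)%C.
Proof.
  intros Hz Hn. unfold htil. destruct Req_EM_T as [->|Ht].
  - eapply Cder_eq. apply Cder_opp; exact Hz. unfold Jt.
    assert (Z : (1 - RtoC 0 * z u = 1)%C) by ring. rewrite Z. field.
  - eapply Cder_eq. apply Cder_mult. apply Cder_Clog; [|exact Hn].
    eapply Cder_eq. apply Cder_minus. apply Cder_const. apply Cder_mult. apply Cder_const. exact Hz.
    reflexivity. apply Cder_const.
    assert (Ht' : RtoC t <> 0%C). { intro E. apply Ht. apply (f_equal fst) in E. exact E. }
    assert (Hn' := nocut_neq0 _ Hn).
    unfold Jt. cbv beta. field. split; auto.
Qed.

Lemma cont_quot (phi : R -> R) l : phi 0 = 0 -> derivable_pt_lim phi 0 l ->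
  continuity_pt (fun s => if Req_EM_T s 0 then l else phi s / s) 0.
Proof.
  intros H0 Hd eps Heps. destruct (Hd eps Heps) as [delta Hdl].
  exists delta; split; [apply cond_pos|]. intros s [_ Hs]. simpl in *. unfold R_dist in *.
  destruct (Req_EM_T 0 0) as [_|]; [|lra].
  destruct (Req_EM_T s 0) as [->|Hs0].
  - rewrite Rminus_eq_0, Rabs_R0; lra.
  - rewrite Rminus_0_r in Hs. specialize (Hdl s Hs0 Hs). rewrite Rplus_0_l, H0, Rminus_0_r in Hdl. exact Hdl.
Qed.

Lemma htil_cont (w : C) t : nocut (1 - w)%C -> 0 <= t <= 1 ->
  continuity_pt (fun s => fst (htil w s)) t /\ continuity_pt (fun s => snd (htil w s)) t.
Proof.
  intros Hn Ht.
  destruct (Req_dec t 0) as [->|Ht0].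
  - assert (HD : Cder (fun s => Clog (1 - RtoC s * w))%C 0 ((- w) / (1 - RtoC 0 * w))%C).
    { apply Cder_Clog. apply Cder_lin. apply nocut_seg; auto; lra. }
    assert (Z : (1 - RtoC 0 * w = 1)%C) by ring. rewrite Z in HD.
    assert (Z' : (- w / 1 = - w)%C) by (field). rewrite Z' in HD.
    destruct HD as [D1 D2]. apply is_derive_Reals in D1. apply is_derive_Reals in D2.
    split.
    + eapply continuity_pt_ext. 2: apply (cont_quot (fun s => fst (Clog (1 - RtoC s * w))%C) (fst (- w)%C)).
      * intros s. unfold htil. destruct Req_EM_T as [->|Hs]; auto.
        unfold Cdiv, Cmult, Cinv; simpl. field. auto.
      * rewrite Z, Clog_1. reflexivity.
      * exact D1.
    + eapply continuity_pt_ext. 2: apply (cont_quot (fun s => snd (Clog (1 - RtoC s * w))%C) (snd (- w)%C)).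
      * intros s. unfold htil. destruct Req_EM_T as [->|Hs]; auto.
        unfold Cdiv, Cmult, Cinv; simpl. field. auto.
      * rewrite Z, Clog_1. reflexivity.
      * exact D2.
  - assert (Htp : 0 < t) by lra.
    assert (HD : Cder (fun s => htil w s) t ((- w) / (1 - RtoC t * w) * / RtoC t + Clog (1 - RtoC t * w) * (- 1 / (RtoC t * RtoC t)))%C).
    { apply (Cder_ext_loc (fun s => Clog (1 - RtoC s * w) * / RtoC s)%C).
      - eapply filter_imp. 2: apply (loc_pos (fun s => s) t 1 (D_id t) Htp).
        intros s Hs. unfold htil. destruct Req_EM_T; [lra|reflexivity].
      - eapply Cder_eq. apply Cder_mult. apply Cder_Clog. apply Cder_lin. apply nocut_seg; auto.
        apply Cder_inv. apply Cder_id. intro E. apply (f_equal fst) in E; simpl in E; lra.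
        f_equal. f_equal. f_equal. ring. }
    split; [exact (Cder_cont1 _ _ _ HD) | exact (Cder_cont2 _ _ _ HD)].
Qed.

Lemma Li2_der (z dz : R -> C) x :
  locally x (fun r => Cder z r (dz r)) ->
  continuity_pt (fun r => fst (dz r)) x -> continuity_pt (fun r => snd (dz r)) x ->
  nocut (1 - z x)%C ->
  Cder (fun r => Li2 (z r)) x (dz x * Ik (z x))%C.
Proof.
  intros Hl Hc1 Hc2 Hn.
  assert (Hz : Cder z x (dz x)) by (apply locally_singleton in Hl; exact Hl).
  assert (Hn1 : Cder (fun r => 1 - z r)%C x (0 - dz x)%C) by (apply Cder_minus; [apply Cder_const|exact Hz]).
  assert (Hloc : locally x (fun r => Cder z r (dz r) /\ nocut (1 - z r)%C)).
  { apply filter_and; auto. exact (nocut_loc _ _ _ Hn1 Hn). }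
  assert (Hzc1 := Cder_cont1 _ _ _ Hz). assert (Hzc2 := Cder_cont2 _ _ _ Hz).
  assert (KEY : forall (pr : C -> R),
     (forall c1 c2 : C, pr (c1 + c2)%C = pr c1 + pr c2) ->
     (forall (c : R) (c1 : C), pr (RtoC c * c1)%C = c * pr c1) ->
     (forall f : R -> C, forall y (l : C), Cder f y l -> is_derive (fun r => pr (f r)) y (pr l)) ->
     (forall F y t, C2c F y t -> continuity_2d_pt (fun u v => pr (F u v)) y t) ->
     (forall w t, nocut (1 - w)%C -> 0 <= t <= 1 -> continuity_pt (fun s => pr (htil w s)) t) ->
     RInt (fun t => pr ((- dz x) * Jt (z x) t)%C) 0 1 = pr ((- dz x) * Ik (z x))%C ->
     is_derive (fun r => - RInt (fun t => pr (htil (z r) t)) 0 1) x (pr (dz x * Ik (z x))%C)).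
  { intros pr Hadd Hsc Hder Hcont Hhc Hval.
    eapply D_eq. apply D_opp.
    apply (is_derive_RInt_param (fun u t => pr (htil (z u) t)) 0 1 x).
    - eapply filter_imp. 2: exact Hloc. intros r [Hr1 Hr2] t Ht.
      rewrite Rmin_left, Rmax_right in Ht by lra.
      eexists. apply Hder. apply htil_Cder; eauto. apply nocut_seg; auto.
    - intros t Ht. rewrite Rmin_left, Rmax_right in Ht by lra.
      assert (HF : C2c (fun u v => 1 - RtoC v * z u)%C x t).
      { apply C2c_minus. apply C2c_const. apply C2c_mult. apply C2c_v. apply C2c_u; auto. }
      assert (HN := C2c_loc_nocut _ _ _ HF (nocut_seg _ _ Hn Ht)).
      apply (continuity_2d_pt_ext_loc (fun u v => pr ((- dz u) * Jt (z u) v)%C)).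
      + eapply locally_2d_impl. 2: apply (locally_2d_and _ _ _ _ (loc_to_2d _ x t Hl) HN).
        apply locally_2d_forall. intros u v [H1 H2]. symmetry. apply is_derive_unique.
        apply Hder. apply htil_Cder; auto.
      + apply Hcont. apply C2c_mult. apply C2c_opp. apply C2c_u; auto.
        unfold Jt. apply C2c_inv. exact HF. apply nocut_neq0. apply nocut_seg; auto.
    - eapply filter_imp. 2: exact Hloc. intros r [Hr1 Hr2].
      apply (@ex_RInt_continuous R_CompleteNormedModule). intros t Ht.
      rewrite Rmin_left, Rmax_right in Ht by lra. apply continuity_pt_filterlim. apply Hhc; auto.
    - rewrite (RInt_ext _ (fun t => pr ((- dz x) * Jt (z x) t)%C)). rewrite Hval.
      replace (- dz x)%C with (RtoC (-1) * dz x)%C by (apply injective_projections; simpl; ring).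
      rewrite <- Cmult_assoc, Hsc. ring.
      intros t Ht. rewrite Rmin_left, Rmax_right in Ht by lra.
      apply is_derive_unique. apply Hder. apply htil_Cder; auto. apply nocut_seg; auto; lra. }
  apply (Cder_ext (fun r => (- RInt (fun t => fst (htil (z r) t)) 0 1, - RInt (fun t => snd (htil (z r) t)) 0 1))).
  { intros r; symmetry; apply Li2_htil. }
  destruct (RInt_cJ (- dz x) (z x) Hn) as [V1 V2].
  split; simpl.
  - apply (KEY fst); auto.
    + intros; simpl; ring.
    + intros f y l [H _]; exact H.
    + intros F y t [H _]; exact H.
    + intros w t H1 H2; apply (htil_cont w t H1 H2).
  - apply (KEY snd); auto.
    + intros; simpl; ring.
    + intros f y l [_ H]; exact H.
    + intros F y t [_ H]; exact H.
    + intros w t H1 H2; apply (htil_cont w t H1 H2).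
Qed.

Lemma polar_aux k t : 0 < k ->
  sqrt ((k * k) * (1 + t²)) * cos (atan t) = k /\ sqrt ((k * k) * (1 + t²)) * sin (atan t) = k * t.
Proof.
  intros Hk. rewrite sqrt_mult_alt by nra. rewrite sqrt_square by lra.
  rewrite cos_atan, sin_atan.
  assert (0 < sqrt (1 + t²)) by (apply sqrt_lt_R0; unfold Rsqr; nra).
  split; field; lra.
Qed.

Lemma polar (z : C) : z <> 0%C -> Cmod z * cos (Carg z) = fst z /\ Cmod z * sin (Carg z) = snd z.
Proof.
  destruct z as [p q]; intros Hz. unfold Cmod; cbn [fst snd].
  destruct (Rlt_dec 0 p) as [Hp|Hp].
  - rewrite Carg_chart1 by auto.
    replace (p ^ 2 + q ^ 2) with ((p * p) * (1 + (q / p)²)) by (unfold Rsqr; field; lra).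
    destruct (polar_aux p (q / p) Hp) as [H1 H2]. rewrite H1, H2. split; [auto| field; lra].
  - destruct (Rlt_dec 0 q) as [Hq|Hq].
    + rewrite Carg_chart2 by auto. rewrite cos_shift, sin_shift.
      replace (p ^ 2 + q ^ 2) with ((q * q) * (1 + (p / q)²)) by (unfold Rsqr; field; lra).
      destruct (polar_aux q (p / q) Hq) as [H1 H2]. rewrite H1, H2. split; [field; lra|auto].
    + destruct (Rlt_dec q 0) as [Hq'|Hq'].
      * rewrite Carg_chart3 by auto.
        replace (- (PI / 2) - atan (p / q)) with (- (PI / 2 - - atan (p / q))) by ring.
        rewrite cos_neg, sin_neg, cos_shift, sin_shift, sin_neg, cos_neg.
        replace (p ^ 2 + q ^ 2) with ((-q * -q) * (1 + (- p / - q)²)) by (unfold Rsqr; field; lra).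
        replace (p / q) with (- p / - q) by (field; lra).
        assert (Hq2 : 0 < - q) by lra.
        destruct (polar_aux (- q) (- p / - q) Hq2) as [H1 H2]. split; rewrite <- Ropp_mult_distr_r; [rewrite H2|rewrite H1]; field; lra.
      * assert (q = 0) by lra. subst q. assert (Hp' : p < 0).
        { destruct (Rlt_dec p 0); auto. exfalso. apply Hz. apply injective_projections; simpl; lra. }
        unfold Carg; simpl. destruct (Rlt_dec 0 p); [lra|]. destruct (Rlt_dec p 0); [|lra].
        destruct (Rle_dec 0 0); [|lra]. replace (0 / p) with 0 by (field; lra).
        rewrite atan_0, Rplus_0_l, cos_PI, sin_PI.
        replace (p * (p * 1) + 0 * (0 * 1)) with ((- p) * (- p)) by ring. rewrite sqrt_square by lra. split; ring.
Qed.

Lemma Csqrt_sq (z : C) : (Csqrt z * Csqrt z)%C = z.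
Proof.
  unfold Csqrt. destruct (Ceq_dec z 0) as [->|Hz].
  - apply injective_projections; simpl; ring.
  - destruct (polar z Hz) as [H1 H2].
    assert (HM : 0 < Cmod z) by (apply Cmod_gt_0; auto).
    unfold Cexp, Clog, Cdiv, Cmult, Cinv; simpl.
    set (a := (ln (Cmod z) * (2 / (2 * (2 * 1) + 0 * (0 * 1))) - Carg z * (- 0 / (2 * (2 * 1) + 0 * (0 * 1))))).
    set (b := (ln (Cmod z) * (- 0 / (2 * (2 * 1) + 0 * (0 * 1))) + Carg z * (2 / (2 * (2 * 1) + 0 * (0 * 1))))).
    assert (Ea : a + a = ln (Cmod z)) by (unfold a; field).
    assert (Eb : 2 * b = Carg z) by (unfold b; field).
    assert (Ee : exp a * exp a = Cmod z) by (rewrite <- exp_plus, Ea, exp_ln; auto).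
    apply injective_projections; simpl.
    + rewrite <- H1, <- Eb, cos_2a, <- Ee. ring.
    + rewrite <- H2, <- Eb, sin_2a, <- Ee. ring.
Qed.

Lemma const01 (G : R -> C) :
  (forall r, 0 <= r <= 1 -> exists l : C, Cder G r l) ->
  (forall r, 0 < r < 1 -> Cder G r 0%C) ->
  forall r, 0 <= r <= 1 -> G r = G 0.
Proof.
  intros Hd H0 r Hr.
  assert (K : forall pr : C -> R, (forall y (l : C), Cder G y l -> is_derive (fun s => pr (G s)) y (pr l)) ->
     pr 0%C = 0 -> pr (G r) = pr (G 0)).
  { intros pr Hpr Hz.
    assert (D : forall y, 0 < y < 1 -> derivable_pt (fun s => pr (G s)) y).
    { intros y Hy. exists 0. rewrite <- Hz. apply is_derive_Reals. apply Hpr. apply H0; auto. }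
    refine (null_derivative_loc (fun s => pr (G s)) 0 1 D _ _ r Hr).
    - intros y Hy. destruct (Hd y Hy) as [l Hl]. apply continuity_pt_filterlim.
      apply (@ex_derive_continuous R_AbsRing R_NormedModule). exists (pr l). apply Hpr; auto.
    - intros y Hy. apply derive_pt_eq_0. rewrite <- Hz. apply is_derive_Reals. apply Hpr. apply H0; auto. }
  apply injective_projections.
  - apply K; auto. intros y l [H _]; exact H.
  - apply K; auto. intros y l [_ H]; exact H.
Qed.

Lemma Li2_0 : Li2 0%C = 0%C.
Proof.
  unfold Li2. rewrite (RInt_ext _ (fun _ => 0)). rewrite (RInt_ext (fun t => snd _) (fun _ => 0)).
  rewrite RInt_const. apply injective_projections; simpl; unfold scal; simpl; unfold mult; simpl; ring.
  - intros t _. unfold Li2_integrand.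
    assert (Z : (1 - RtoC t * 0 = 1)%C) by ring. rewrite Z, Clog_1. simpl. ring.
  - intros t _. unfold Li2_integrand.
    assert (Z : (1 - RtoC t * 0 = 1)%C) by ring. rewrite Z, Clog_1. simpl. ring.
Qed.

Lemma nocut_mul (p q : C) : 0 < fst p -> 0 < fst q -> nocut (p * q)%C.
Proof.
  destruct p as [a b], q as [c d]; unfold nocut; simpl. intros Ha Hc.
  destruct (Req_dec (a * d + b * c) 0) as [E|E]; [left|right; exact E].
  assert (ad : a * d = - (b * c)) by lra.
  assert (a * (a * c - b * d) = (a * a + b * b) * c) by (replace (a * (a * c - b * d)) with (a * a * c - b * (a * d)) by ring; rewrite ad; ring).
  assert (0 < (a * a + b * b) * c) by (apply Rmult_lt_0_compat; nra).
  nra.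
Qed.

Lemma re_inv_pos (q : C) : 0 < fst q -> 0 < fst (/ q)%C.
Proof.
  destruct q as [c d]; simpl. intros Hc. apply Rdiv_lt_0_compat; auto. nra.
Qed.

Lemma re_pos_neq0 (q : C) : 0 < fst q -> q <> 0%C.
Proof. intros H E; subst; simpl in H; lra. Qed.

Definition Xp (x0 : C) (r : R) : C := (1 + RtoC r * (x0 - 1))%C.
Definition Af (w : C) : C := (w - w * w)%C.
Definition Bf (w : C) : C := ((w - 1) * / (w * w))%C.
Definition Cf (w : C) : C := (w + / w - 1)%C.

Lemma alg_A (w : C) : w <> 0%C -> (1 - Af w = w * Cf w)%C.
Proof. intros; unfold Af, Cf; field; auto. Qed.
Lemma alg_B (w : C) : w <> 0%C -> (1 - Bf w = Cf w * / w)%C.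
Proof. intros; unfold Bf, Cf; field; auto. Qed.
Lemma alg_C (w : C) : w <> 0%C -> (1 - Af w * Bf w = Cf w)%C.
Proof. intros; unfold Af, Bf, Cf; field; auto. Qed.

Lemma path_ineq p0 q0 r : 0 < p0 -> 0 < p0 * (p0 * p0 + q0 * q0) + p0 - (p0 * p0 + q0 * q0) -> 0 <= r <= 1 ->
  let p := 1 + r * (p0 - 1) in let q := r * q0 in
  0 < p /\ 0 < p * (p * p + q * q) + p - (p * p + q * q).
Proof.
  intros Hp0 H Hr p q. assert (Hp : 0 < p) by (unfold p; nra). split; auto.
  destruct (Rle_dec 1 p0) as [H1|H1].
  - assert (1 <= p) by (unfold p; nra).
    assert (0 <= p * p + q * q) by nra. nra.
  - set (e := 1 - p0). assert (He : 0 < e < 1) by (unfold e; lra).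
    set (N := fun y => 1 - 2 * y + 2 * y * y - y * y * y).
    assert (Hp' : p = 1 - r * e) by (unfold p, e; ring).
    assert (E1 : p * (p * p + q * q) + p - (p * p + q * q) = N (r * e) - r * r * r * e * q0 * q0).
    { unfold N, q; rewrite Hp'; ring. }
    assert (E0 : p0 * (p0 * p0 + q0 * q0) + p0 - (p0 * p0 + q0 * q0) = N e - e * q0 * q0).
    { unfold N, e; ring. }
    assert (HN : N e <= N (r * e)).
    { assert (EN : N (r * e) - N e = (e - r * e) * ((1 - r * e - e) * (1 - r * e - e) + 1 - r * e * e)).
      { unfold N; ring. }
      assert (0 <= e - r * e) by nra. assert (r * e * e < 1) by nra.
      assert (0 <= (1 - r * e - e) * (1 - r * e - e)) by (pose proof (Rle_0_sqr (1 - r * e - e)) as HH; unfold Rsqr in HH; exact HH).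
      assert (0 <= (e - r * e) * ((1 - r * e - e) * (1 - r * e - e) + 1 - r * e * e)) by (apply Rmult_le_pos; lra). lra. }
    assert (r * r * r * (e * q0 * q0) <= e * q0 * q0).
    { assert (0 <= e * q0 * q0) by nra. assert (r * r * r <= 1) by nra.
      assert (0 <= r * r * r) by nra. nra. }
    nra.
Qed.

Lemma path_ok (x0 : C) r : 0 < fst x0 -> 0 < fst (Cf x0) -> 0 <= r <= 1 ->
  0 < fst (Xp x0 r) /\ 0 < fst (Cf (Xp x0 r)).
Proof.
  destruct x0 as [p0 q0]. intros H1 H2 Hr.
  assert (Hre : forall p q, 0 < p -> fst (Cf (p, q)) = (p * (p * p + q * q) + p - (p * p + q * q)) / (p * p + q * q)).
  { intros p q Hp. unfold Cf; simpl. field. nra. }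
  simpl in H1. rewrite Hre in H2 by auto.
  assert (H2' : 0 < p0 * (p0 * p0 + q0 * q0) + p0 - (p0 * p0 + q0 * q0)).
  { assert (0 < p0 * p0 + q0 * q0) by nra.
    apply (Rmult_lt_compat_r (p0 * p0 + q0 * q0)) in H2; auto. unfold Rdiv in H2.
    rewrite Rmult_0_l, Rmult_assoc, Rinv_l, Rmult_1_r in H2; lra. }
  destruct (path_ineq p0 q0 r H1 H2' Hr) as [A B].
  assert (EX : Xp (p0, q0) r = (1 + r * (p0 - 1), r * q0)).
  { unfold Xp; apply injective_projections; simpl; ring. }
  rewrite EX. split; [simpl; auto|]. rewrite Hre by auto.
  apply Rdiv_lt_0_compat; auto. nra.
Qed.

Ltac cder_step := first [ apply Cder_id | apply Cder_const | apply Cder_plus | apply Cder_minus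
   | apply Cder_mult | apply Cder_opp | apply Cder_inv ].

Lemma X_der (x0 : C) r : Cder (Xp x0) r (x0 - 1)%C.
Proof. unfold Xp. eapply Cder_eq. apply Cder_plus. apply Cder_const. apply Cder_mult. apply Cder_id. apply Cder_const.
  cbv beta. ring. Qed.

Definition dA (x0 : C) r : C := ((x0 - 1) * (1 - 2 * Xp x0 r))%C.
Definition dB (x0 : C) r : C := ((x0 - 1) * (2 - Xp x0 r) * / (Xp x0 r * Xp x0 r * Xp x0 r))%C.
Definition dCf (x0 : C) r : C := ((x0 - 1) * (1 - / (Xp x0 r * Xp x0 r)))%C.
Definition dCc (x0 : C) r : C := (dA x0 r * Bf (Xp x0 r) + Af (Xp x0 r) * dB x0 r)%C.

Lemma A_der (x0 : C) r : Cder (fun s => Af (Xp x0 s)) r (dA x0 r).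
Proof. unfold Af. eapply Cder_eq. apply Cder_minus. apply X_der. apply Cder_mult; apply X_der.
  cbv beta. unfold dA. ring. Qed.

Lemma B_der (x0 : C) r : Xp x0 r <> 0%C -> Cder (fun s => Bf (Xp x0 s)) r (dB x0 r).
Proof. intros H. unfold Bf. eapply Cder_eq. apply Cder_mult. apply Cder_minus. apply X_der. apply Cder_const.
  apply Cder_inv. apply Cder_mult; apply X_der. apply Cmult_neq_0; auto.
  cbv beta. unfold dB. field. auto. Qed.

Lemma Cf_der (x0 : C) r : Xp x0 r <> 0%C -> Cder (fun s => Cf (Xp x0 s)) r (dCf x0 r).
Proof. intros H. unfold Cf. eapply Cder_eq. apply Cder_minus. apply Cder_plus. apply X_der.
  apply Cder_inv. apply X_der. auto. apply Cder_const.
  cbv beta. unfold dCf. field. auto. Qed.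

Lemma Cc_der (x0 : C) r : Xp x0 r <> 0%C -> Cder (fun s => Af (Xp x0 s) * Bf (Xp x0 s))%C r (dCc x0 r).
Proof. intros H. apply Cder_mult. apply A_der. apply B_der; auto. Qed.

Lemma X_neq0 (x0 : C) r : 0 < fst (Xp x0 r) -> Xp x0 r <> 0%C.
Proof. apply re_pos_neq0. Qed.

Lemma dA_ex (x0 : C) r : exists l : C, Cder (fun s => dA x0 s) r l.
Proof. unfold dA. eexists. eapply Cder_eq. apply (Cder_mult (fun _ => (x0 - 1)%C)). apply Cder_const. apply Cder_minus. apply Cder_const.
  apply Cder_mult. apply Cder_const. apply X_der. reflexivity. Qed.

Lemma dB_ex (x0 : C) r : Xp x0 r <> 0%C -> exists l : C, Cder (fun s => dB x0 s) r l.
Proof. intros H. unfold dB. eexists. apply Cder_mult. apply Cder_mult. apply Cder_const. apply Cder_minus. apply Cder_const.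
  apply X_der. apply Cder_inv. apply Cder_mult. apply Cder_mult. apply X_der. apply X_der. apply X_der.
  apply Cmult_neq_0; auto. apply Cmult_neq_0; auto. Qed.

Lemma dCc_ex (x0 : C) r : Xp x0 r <> 0%C -> exists l : C, Cder (fun s => dCc x0 s) r l.
Proof. intros H. unfold dCc. destruct (dA_ex x0 r) as [l1 H1]. destruct (dB_ex x0 r H) as [l2 H2].
  eexists. apply Cder_plus; apply Cder_mult; eauto. apply B_der; auto. apply A_der. Qed.

Lemma ex_cont (f : R -> C) r : (exists l : C, Cder f r l) ->
  continuity_pt (fun s => fst (f s)) r /\ continuity_pt (fun s => snd (f s)) r.
Proof. intros [l H]. split; [exact (Cder_cont1 _ _ _ H)|exact (Cder_cont2 _ _ _ H)]. Qed.

Lemma loc_X (x0 : C) r : 0 < fst (Xp x0 r) -> locally r (fun s => 0 < fst (Xp x0 s)).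
Proof. intros H. destruct (X_der x0 r) as [H1 _]. exact (loc_pos _ _ _ H1 H). Qed.

Definition Fp (x0 : C) (r : R) : C :=
  (- Li2 (Af (Xp x0 r)) - Li2 (Bf (Xp x0 r)) - RtoC (3/2) * (Clog (Xp x0 r) * Clog (Xp x0 r))
   + Li2 (Af (Xp x0 r) * Bf (Xp x0 r)))%C.

Definition Fd (x0 : C) (r : R) : C :=
  (- (dA x0 r * Ik (Af (Xp x0 r))) - (dB x0 r * Ik (Bf (Xp x0 r)))
   - RtoC (3/2) * ((x0 - 1) / Xp x0 r * Clog (Xp x0 r) + Clog (Xp x0 r) * ((x0 - 1) / Xp x0 r))
   + dCc x0 r * Ik (Af (Xp x0 r) * Bf (Xp x0 r)))%C.

Lemma F_der (x0 : C) r : 0 < fst (Xp x0 r) -> 0 < fst (Cf (Xp x0 r)) -> Cder (Fp x0) r (Fd x0 r).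
Proof.
  intros HX HC. assert (HX0 := X_neq0 _ _ HX).
  assert (LX := loc_X _ _ HX).
  assert (HCf0 := re_pos_neq0 _ HC).
  unfold Fp. eapply Cder_eq.
  - apply Cder_plus. apply Cder_minus. apply Cder_minus. apply Cder_opp.
    + apply (Li2_der (fun s => Af (Xp x0 s)) (dA x0)).
      * apply filter_forall. intros; apply A_der.
      * apply (ex_cont (dA x0)). apply dA_ex.
      * apply (ex_cont (dA x0)). apply dA_ex.
      * rewrite alg_A by auto. apply nocut_mul; auto.
    + apply (Li2_der (fun s => Bf (Xp x0 s)) (dB x0)).
      * eapply filter_imp. 2: exact LX. intros s Hs. apply B_der. apply X_neq0; auto.
      * apply (ex_cont (dB x0)). apply dB_ex; auto.
      * apply (ex_cont (dB x0)). apply dB_ex; auto.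
      * rewrite alg_B by auto. apply nocut_mul; auto. apply re_inv_pos; auto.
    + apply Cder_mult. apply Cder_const. apply Cder_mult; apply Cder_Clog; try apply X_der; left; auto.
    + apply (Li2_der (fun s => Af (Xp x0 s) * Bf (Xp x0 s))%C (dCc x0)).
      * eapply filter_imp. 2: exact LX. intros s Hs. apply Cc_der. apply X_neq0; auto.
      * apply (ex_cont (dCc x0)). apply dCc_ex; auto.
      * apply (ex_cont (dCc x0)). apply dCc_ex; auto.
      * rewrite alg_C by auto. left; auto.
  - unfold Fd. ring.
Qed.

Lemma X0 (x0 : C) : Xp x0 0 = 1%C.
Proof. unfold Xp. apply injective_projections; simpl; ring. Qed.
Lemma X1 (x0 : C) : Xp x0 1 = x0.
Proof. unfold Xp. apply injective_projections; simpl; ring. Qed.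

Section S.
End S.

Lemma logA (x0 : C) : 0 < fst x0 -> 0 < fst (Cf x0) -> forall r, 0 <= r <= 1 ->
  Clog (1 - Af (Xp x0 r)) = (Clog (Xp x0 r) + Clog (Cf (Xp x0 r)))%C.
Proof.
  intros H1 H2.
  set (G := fun r => (Clog (1 - Af (Xp x0 r)) - Clog (Xp x0 r) - Clog (Cf (Xp x0 r)))%C).
  assert (HD : forall r, 0 <= r <= 1 -> Cder G r 0%C).
  { intros r Hr. destruct (path_ok x0 r H1 H2 Hr) as [HX HC].
    assert (HX0 := X_neq0 _ _ HX). assert (HC0 := re_pos_neq0 _ HC).
    assert (HA : (1 - Af (Xp x0 r))%C <> 0%C) by (rewrite alg_A by auto; apply Cmult_neq_0; auto).
    unfold G. eapply Cder_eq.
    - apply Cder_minus. apply Cder_minus.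
      + apply Cder_Clog. apply Cder_minus. apply Cder_const. apply A_der.
        rewrite alg_A by auto. apply nocut_mul; auto.
      + apply Cder_Clog. apply X_der. left; auto.
      + apply Cder_Clog. apply Cf_der; auto. left; auto.
    - cbv beta. rewrite alg_A by auto.
      assert (K : (0 - dA x0 r = (x0 - 1) * Cf (Xp x0 r) + Xp x0 r * dCf x0 r)%C).
      { unfold dA, dCf, Cf. field. auto. }
      rewrite K. set (c := Cf (Xp x0 r)) in *. set (X := Xp x0 r) in *. set (dc := dCf x0 r).
      field. auto. }
  intros r Hr.
  assert (E := const01 G (fun r Hr => ex_intro _ _ (HD r Hr)) (fun r Hr => HD r (conj (Rlt_le _ _ (proj1 Hr)) (Rlt_le _ _ (proj2 Hr)))) r Hr).
  assert (G0 : G 0 = 0%C).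
  { unfold G. rewrite X0. unfold Af, Cf.
    assert (Z1 : (1 - (1 - 1 * 1) = 1)%C) by ring. assert (Z2 : (1 + / 1 - 1 = 1)%C) by field.
    rewrite Z1, Z2, Clog_1. ring. }
  rewrite G0 in E. unfold G in E.
  replace (Clog (1 - Af (Xp x0 r))) with ((Clog (1 - Af (Xp x0 r)) - Clog (Xp x0 r) - Clog (Cf (Xp x0 r))) + Clog (Xp x0 r) + Clog (Cf (Xp x0 r)))%C by ring.
  rewrite E. ring.
Qed.

Lemma logB (x0 : C) : 0 < fst x0 -> 0 < fst (Cf x0) -> forall r, 0 <= r <= 1 ->
  Clog (1 - Bf (Xp x0 r)) = (Clog (Cf (Xp x0 r)) - Clog (Xp x0 r))%C.
Proof.
  intros H1 H2.
  set (G := fun r => (Clog (1 - Bf (Xp x0 r)) + Clog (Xp x0 r) - Clog (Cf (Xp x0 r)))%C).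
  assert (HD : forall r, 0 <= r <= 1 -> Cder G r 0%C).
  { intros r Hr. destruct (path_ok x0 r H1 H2 Hr) as [HX HC].
    assert (HX0 := X_neq0 _ _ HX). assert (HC0 := re_pos_neq0 _ HC).
    unfold G. eapply Cder_eq.
    - apply Cder_minus. apply Cder_plus.
      + apply Cder_Clog. apply Cder_minus. apply Cder_const. apply B_der; auto.
        rewrite alg_B by auto. apply nocut_mul; auto. apply re_inv_pos; auto.
      + apply Cder_Clog. apply X_der. left; auto.
      + apply Cder_Clog. apply Cf_der; auto. left; auto.
    - cbv beta. rewrite alg_B by auto.
      assert (K : (0 - dB x0 r = dCf x0 r * / Xp x0 r - Cf (Xp x0 r) * (x0 - 1) * / (Xp x0 r * Xp x0 r))%C).
      { unfold dB, dCf, Cf. field. auto. }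
      rewrite K. set (c := Cf (Xp x0 r)) in *. set (X := Xp x0 r) in *. set (dc := dCf x0 r).
      field. auto. }
  intros r Hr.
  assert (E := const01 G (fun r Hr => ex_intro _ _ (HD r Hr)) (fun r Hr => HD r (conj (Rlt_le _ _ (proj1 Hr)) (Rlt_le _ _ (proj2 Hr)))) r Hr).
  assert (G0 : G 0 = 0%C).
  { unfold G. rewrite X0. unfold Bf, Cf.
    assert (Z1 : (1 - (1 - 1) * / (1 * 1) = 1)%C) by field. assert (Z2 : (1 + / 1 - 1 = 1)%C) by field.
    rewrite Z1, Z2, Clog_1. ring. }
  rewrite G0 in E. unfold G in E.
  replace (Clog (1 - Bf (Xp x0 r))) with ((Clog (1 - Bf (Xp x0 r)) + Clog (Xp x0 r) - Clog (Cf (Xp x0 r))) - Clog (Xp x0 r) + Clog (Cf (Xp x0 r)))%C by ring.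
  rewrite E. ring.
Qed.

Lemma Fd_zero (x0 : C) : 0 < fst x0 -> 0 < fst (Cf x0) -> forall r, 0 < r < 1 -> Fd x0 r = 0%C.
Proof.
  intros H1 H2 r Hr. assert (Hr' : 0 <= r <= 1) by lra.
  destruct (path_ok x0 r H1 H2 Hr') as [HX HC].
  assert (HX0 := X_neq0 _ _ HX). assert (HC0 := re_pos_neq0 _ HC).
  destruct (Ceq_dec x0 1) as [E1|E1].
  - assert (D0 : (x0 - 1 = 0)%C) by (rewrite E1; ring).
    unfold Fd, dCc, dA, dB. rewrite D0. field. auto.
  - assert (HX1 : (Xp x0 r - 1)%C <> 0%C).
    { assert (Hr0 : RtoC r <> 0%C) by (intro Z; apply (f_equal fst) in Z; simpl in Z; lra).
      assert (Hd0 : (x0 - 1)%C <> 0%C).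
      { intro Z. apply E1. replace x0 with ((x0 - 1) + 1)%C by ring. rewrite Z. ring. }
      replace (Xp x0 r - 1)%C with (RtoC r * (x0 - 1))%C by (unfold Xp; ring).
      apply Cmult_neq_0; auto. }
    assert (HA0 : Af (Xp x0 r) <> 0%C).
    { unfold Af. replace (Xp x0 r - Xp x0 r * Xp x0 r)%C with (- (Xp x0 r * (Xp x0 r - 1)))%C by ring.
      intro E. apply (Cmult_neq_0 _ _ HX0 HX1). replace (Xp x0 r * (Xp x0 r - 1))%C with (- - (Xp x0 r * (Xp x0 r - 1)))%C by ring.
      rewrite E. ring. }
    assert (HB0 : Bf (Xp x0 r) <> 0%C).
    { unfold Bf. apply Cmult_neq_0; auto. assert (HXX : (Xp x0 r * Xp x0 r)%C <> 0%C) by (apply Cmult_neq_0; auto).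
      intro E. pose proof (Cinv_r _ HXX) as E2. rewrite E in E2. rewrite Cmult_0_r in E2.
      apply (f_equal fst) in E2. simpl in E2. lra. }
    unfold Fd.
    rewrite (Li2_I _ HA0), (Li2_I _ HB0), (Li2_I _ (Cmult_neq_0 _ _ HA0 HB0)).
    2: rewrite alg_C by auto; left; auto.
    2: rewrite alg_B by auto; apply nocut_mul; auto; apply re_inv_pos; auto.
    2: rewrite alg_A by auto; apply nocut_mul; auto.
    rewrite (logA x0 H1 H2 r Hr'), (logB x0 H1 H2 r Hr'), alg_C by auto.
    set (LX := Clog (Xp x0 r)). set (LC := Clog (Cf (Xp x0 r))).
    unfold dCc, dA, dB, Af, Bf in *. set (X := Xp x0 r) in *.
    clearbody LX LC X. assert (K32 : RtoC (3/2) = (3 / 2)%C) by (apply injective_projections; simpl; field). rewrite K32.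
    field. repeat split; auto.
Qed.

Lemma main_x0 (x0 : C) : 0 < fst x0 -> 0 < fst (Cf x0) ->
  (- Li2 (Af x0) - Li2 (Bf x0) - RtoC (3/2) * (Clog x0 * Clog x0) + Li2 (Af x0 * Bf x0))%C = 0%C.
Proof.
  intros H1 H2.
  assert (E := const01 (Fp x0)
    (fun r Hr => ex_intro _ _ (F_der x0 r (proj1 (path_ok x0 r H1 H2 Hr)) (proj2 (path_ok x0 r H1 H2 Hr))))
    (fun r Hr => let Hr' := conj (Rlt_le _ _ (proj1 Hr)) (Rlt_le _ _ (proj2 Hr)) in
       Cder_eq _ _ _ _ (F_der x0 r (proj1 (path_ok x0 r H1 H2 Hr')) (proj2 (path_ok x0 r H1 H2 Hr')))
         (Fd_zero x0 H1 H2 r Hr)) 1 (conj Rle_0_1 (Rle_refl 1))).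
  unfold Fp in E. rewrite X1, X0 in E. rewrite E.
  assert (ZA : Af 1 = 0%C) by (unfold Af; ring).
  assert (ZB : Bf 1 = 0%C) by (unfold Bf; ring).
  rewrite ZA, ZB, Cmult_0_l, Li2_0, Clog_1. ring.
Qed.

Lemma cmod_lt1 (u : C) : Cmod u < 1 -> fst u ^ 2 + snd u ^ 2 < 1.
Proof.
  unfold Cmod. intros H. destruct (Rlt_or_le (fst u ^ 2 + snd u ^ 2) 1) as [h|h]; auto.
  apply sqrt_le_1_alt in h. rewrite sqrt_1 in h. lra.
Qed.

Theorem theorem3 (u : C) (hu : (Cmod u < 1)%R) :
  let s1 := Csqrt (u * (4 - 3 * u))%C in
  let s2 := Csqrt ((4 - 3 * u) * u)%C in
  (- Li2 ((2 * u ^ 2 - 3 * u + s1) / (2 * (u - 1) ^ 2))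
   - Li2 ((2 * u ^ 2 - 3 * u - s1) / (2 * (u - 1) ^ 2)))%C
  = (RtoC (3 / 2) * (Clog (1 - (u - s2) / (2 * (u - 1)))) ^ 2
     - Li2 (u / (u - 1)))%C.
Proof.
  intros s1 s2.
  assert (E12 : s2 = s1) by (unfold s1, s2; rewrite Cmult_comm; reflexivity).
  rewrite E12. clearbody s2. clear s2 E12.
  assert (Hs : (s1 * s1 = u * (4 - 3 * u))%C) by (apply Csqrt_sq).
  clearbody s1.
  assert (Hu := cmod_lt1 u hu).
  assert (Hu1 : fst u < 1) by nra.
  assert (Hu0 : (u - 1)%C <> 0%C).
  { intro E. apply (f_equal fst) in E. simpl in E. lra. }
  set (x0 := (1 - (u - s1) / (2 * (u - 1)))%C).
  set (x0' := ((u - 2 - s1) / (2 * (u - 1)))%C).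
  assert (Hprod : (x0 * x0' = 1)%C).
  { assert (K : (x0 * x0' = 1 + (u * (4 - 3 * u) - s1 * s1) / (4 * (u - 1) * (u - 1)))%C).
    { unfold x0, x0'. field. auto. }
    rewrite K, Hs. field. auto. }
  assert (Hx0 : x0 <> 0%C).
  { intro E. rewrite E, Cmult_0_l in Hprod. apply (f_equal fst) in Hprod. simpl in Hprod. lra. }
  assert (Hinv : (/ x0 = x0')%C).
  { replace (/ x0)%C with (/ x0 * (x0 * x0'))%C by (rewrite Hprod; ring). field. auto. }
  assert (HCf : Cf x0 = (- / (u - 1))%C).
  { unfold Cf. rewrite Hinv. unfold x0, x0'. field. auto. }
  assert (HCre : 0 < fst (Cf x0)).
  { rewrite HCf. clear - Hu1 Hu0. destruct u as [u1 u2]. simpl in *.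
    assert (0 < / ((u1 + - (1)) * ((u1 + - (1)) * 1) + (u2 + - 0) * ((u2 + - 0) * 1))) by (apply Rinv_0_lt_compat; nra).
    unfold Rdiv. nra. }
  assert (Hre : 0 < fst x0).
  { assert (Hsum : fst (Cf x0) = fst x0 + fst (/ x0)%C - 1) by (unfold Cf; simpl; ring).
    assert (Hx0' := Hx0). clearbody x0. destruct x0 as [p q]. simpl in Hsum |- *.
    assert (HD : 0 < p * (p * 1) + q * (q * 1)).
    { destruct (Req_dec p 0) as [Hp|Hp].
      - subst p. destruct (Req_dec q 0) as [Hq|Hq].
        + subst q. exfalso. apply Hx0'. reflexivity.
        + assert (0 < q * q) by (apply Rsqr_pos_lt; auto). nra.
      - assert (0 < p * p) by (apply Rsqr_pos_lt; auto). nra. }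
    assert (0 < / (p * (p * 1) + q * (q * 1))) by (apply Rinv_0_lt_compat; auto).
    unfold Rdiv in Hsum. simpl in HCre. nra. }
  assert (M := main_x0 x0 Hre HCre).
  assert (P2 : forall w : C, (w ^ 2 = w * w)%C) by (intros; simpl; ring).
  assert (Hx0' : x0' <> 0%C).
  { intro E. rewrite E, Cmult_0_r in Hprod. apply (f_equal fst) in Hprod. simpl in Hprod. lra. }
  assert (H2 : RtoC 2 <> 0%C) by (intro E; apply (f_equal fst) in E; simpl in E; lra).
  assert (EA : Af x0 = ((2 * u ^ 2 - 3 * u + s1) / (2 * (u - 1) ^ 2))%C).
  { rewrite !P2. unfold Af.
    assert (K : (x0 - x0 * x0 = (2 * (u * u) - 3 * u + s1) / (2 * ((u - 1) * (u - 1)))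
                  + (u * (4 - 3 * u) - s1 * s1) / (4 * (u - 1) * (u - 1)))%C).
    { unfold x0. field. auto. }
    rewrite K, Hs. field. auto. }
  assert (EB : Bf x0 = ((2 * u ^ 2 - 3 * u - s1) / (2 * (u - 1) ^ 2))%C).
  { rewrite !P2. unfold Bf.
    assert (K1 : ((x0 - 1) * / (x0 * x0) = (x0 * x0' - x0') * x0' / ((x0 * x0') * (x0 * x0')))%C).
    { field. auto. }
    rewrite K1, Hprod.
    assert (K : ((1 - x0') * x0' / (1 * 1) = (2 * (u * u) - 3 * u - s1) / (2 * ((u - 1) * (u - 1)))
                  + (u * (4 - 3 * u) - s1 * s1) / (4 * (u - 1) * (u - 1)))%C).
    { unfold x0'. field. auto. }
    rewrite K, Hs. field. auto. }
  assert (EC : (((2 * u ^ 2 - 3 * u + s1) / (2 * (u - 1) ^ 2)) * ((2 * u ^ 2 - 3 * u - s1) / (2 * (u - 1) ^ 2)) = u / (u - 1))%C).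
  { rewrite !P2.
    assert (K : (((2 * (u * u) - 3 * u + s1) / (2 * ((u - 1) * (u - 1)))) * ((2 * (u * u) - 3 * u - s1) / (2 * ((u - 1) * (u - 1))))
       = u / (u - 1) + (u * (4 - 3 * u) - s1 * s1) / (4 * ((u - 1) * (u - 1)) * ((u - 1) * (u - 1))))%C).
    { field. auto. }
    rewrite K, Hs. field. auto. }
  rewrite EA, EB, EC in M.
  rewrite (P2 (Clog x0)).
  assert (G : forall A B : C, (A - B = 0)%C -> A = B).
  { intros A B HAB. replace A with (A - B + B)%C by ring. rewrite HAB. ring. }
  apply G. rewrite <- M. ring.
Qed.
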